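(* Let $A=B\wr_Q\mathcal{H}(d)$ be a quantum wreath product whose parameters $Q=(R,S,\rho,\sigma)$ satisfy: $\sigma$ is the flip $a\otimes b\mapsto b\otimes a$, $\rho=0$, and Conditions (C1)–(C9) hold. Let $V_B$ be a right $B$-module with $K$-basis $\{v_i\}_{i\in I}$, $I$ totally ordered, let $V_B^{\otimes d}$ be a right $B^{\otimes d}$-module via the factorwise action, let $\mu\in I^d$ with $\mu_1<\cdots<\mu_d$, and let $W$ be the $B^{\otimes d}$-submodule of $V_B^{\otimes d}$ generated by $\{v_{\mu\cdot g}\mid g\in\Sigma_d\}$. Consider the rule, for $\nu\in\{\mu\cdot g\mid g\in\Sigma_d\}$ and $1\le i\le d-1$: $v_\nu.H_i=v_{\nu\cdot s_i}$ if $\nu_i<\nu_{i+1}$, and $v_\nu.H_i=v_{\nu\cdot s_i}.R_i+v_\nu.S_i$ if $\nu_i>\nu_{i+1}$. (a) If $B$ acts on $V_B$ through a counit $\epsilon:B\to K$ (i.e. $v.b=\epsilon(b)v$), and there is $r\in K$ with $r^2=\epsilon(S)r+\epsilon(R)$, then this rule, together with the action of $B^{\otimes d}$, extends to a right $A$-module structure on $W$. (b) If $S=0$ and $R=1\otimes1$, then this rule, together with the action of $B^{\otimes d}$, extends to a right $A$-module structure on $W$.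
   Context: $K$ commutative ring, $B$ associative unital $K$-algebra free over $K$, $d\ge2$, tensor products over $K$. For $Z\in B\otimes B$, $Z_i:=1^{\otimes(i-1)}\otimes Z\otimes1^{\otimes(d-i-1)}$; $\phi_i$ applies $\phi\in\operatorname{End}_K(B\otimes B)$ to tensor factors $i,i+1$. $B\wr_Q\mathcal{H}(d)$: $K$-algebra generated by the algebra $B^{\otimes d}$ and $H_1,\dots,H_{d-1}$ with $H_kH_{k+1}H_k=H_{k+1}H_kH_{k+1}$, $H_iH_j=H_jH_i$ ($|i-j|\ge2$), $H_i^2=S_iH_i+R_i$, $H_ib=\sigma_i(b)H_i+\rho_i(b)$. With $\sigma$ the flip and $\rho=0$, Conditions (C1)–(C9) amount to (and are implied by) $\sigma(R)=R$, $(\sigma(S)-S)R=0$, and $Sx=\sigma(x)S$... more precisely they are: (C1) $\sigma(1\otimes1)=1\otimes1$; (C2) $\sigma$ multiplicative; (C3) $\sigma(S)S+\sigma(R)=S^2+R$, $\sigma(S)R=SR$; (C4) $\sigma^2(a)S=S\sigma(a)$ and $\sigma^2(a)R=Ra$ for all $a\in B\otimes B$; (C5) $\sigma_1\sigma_2\sigma_1=\sigma_2\sigma_1\sigma_2$ on $B^{\otimes3}$; (C8) $S_i=\sigma_j\sigma_i(S_j)$, $R_i=\sigma_j\sigma_i(R_j)$ in $B^{\otimes3}$ for $\{i,j\}=\{1,2\}$ (the remaining conditions (C6),(C7),(C9) being trivial when $\rho=0$). $v_\nu:=v_{\nu_1}\otimes\cdots\otimes v_{\nu_d}$; $\Sigma_d$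 acts on $I^d$ by place permutations, $\nu\cdot s_i$ swapping entries $i,i+1$. For $X\in B\otimes B$, $\epsilon(X):=(\epsilon\otimes\epsilon)(X)$. *)

(* Defs.v *)
From HB Require Import structures.
From mathcomp Require Import all_boot all_order all_algebra.
From mathcomp Require Import finmap monalg.

Set Implicit Arguments.
Unset Strict Implicit.
Unset Printing Implicit Defensive.

Import Order.TTheory GRing.Theory.
Local Open Scope ring_scope.

(* B is the free K-module {malg K[J]} on a basis (b_j)_{j in J}, with
   multiplication given by structure constants  mulb j j' = b_j b_j'.
   B^{\otimes n} is modelled as the free K-module on the basis tensors
   b_{s_1} (x) ... (x) b_{s_n}, i.e. {malg K[seq J]} restricted to keys of
   length n (predicate [homog n]).  Similarly V_B = {malg K[I]} with basis
   (v_i)_{i in I} and V_B^{\otimes d} = {malg K[seq I]} (keys of length d). *)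

Section QWP.
Context {K : comNzRingType}.

Fixpoint ptens {X : choiceType} (l : seq {malg K[X]}) : {malg K[seq X]} :=
  match l with
  | [::] => << [::] >>
  | x :: l' =>
      \sum_(j <- msupp x) \sum_(s <- msupp (ptens l'))
         << x@_j * (ptens l')@_s *g (j :: s) >>
  end.

(* tensor product (concatenation) of tensors *)
Definition tcat {X : choiceType} (A C : {malg K[seq X]}) : {malg K[seq X]} :=
  \sum_(s <- msupp A) \sum_(t <- msupp C) << A@_s * C@_t *g (s ++ t) >>.

Definition mapkeys {X : choiceType} (f : seq X -> seq X) (A : {malg K[seq X]})
  : {malg K[seq X]} :=
  \sum_(s <- msupp A) << A@_s *g f s >>.

Definition homog {X : choiceType} (n : nat) (A : {malg K[seq X]}) : Prop :=
  forall s, s \in msupp A -> size s = n.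

Section Algebra.
Variables (J : choiceType) (mulb : J -> J -> {malg K[J]}).

Definition bmul (x y : {malg K[J]}) : {malg K[J]} :=
  \sum_(j <- msupp x) \sum_(j' <- msupp y) (x@_j * y@_j') *: mulb j j'.

Definition tmul (A C : {malg K[seq J]}) : {malg K[seq J]} :=
  \sum_(s <- msupp A) \sum_(t <- msupp C)
     (A@_s * C@_t) *: ptens [seq mulb p.1 p.2 | p <- zip s t].

Variable oneB : {malg K[J]}.

Definition emb (d i : nat) (Z : {malg K[seq J]}) : {malg K[seq J]} :=
  tcat (tcat (ptens (nseq i.-1 oneB)) Z) (ptens (nseq (d - i.+1) oneB)).
End Algebra.

(* swapping the entries at positions n+1, n+2 (1-indexed) of a sequence:
   the place permutation by s_{n+1}                                        *)
Fixpoint swapn {X : Type} (n : nat) (s : seq X) : seq X :=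
  match n, s with
  | 0, x :: y :: s' => y :: x :: s'
  | n'.+1, x :: s' => x :: swapn n' s'
  | _, _ => s
  end.

(* sigma_i on B^{\otimes d} (1-indexed i): flip of the factors i, i+1 *)
Definition sigma_i {X : choiceType} (i : nat) (A : {malg K[seq X]}) :=
  mapkeys (swapn i.-1) A.

(* nu_{n+1} < nu_{n+2} *)
Fixpoint ascentn {dI : Order.disp_t} {X : orderType dI} (n : nat) (s : seq X)
  : bool :=
  match n, s with
  | 0, x :: y :: _ => (x < y)%O
  | n'.+1, _ :: s' => ascentn n' s'
  | _, _ => false
  end.

Section Module.
Variables (J I : choiceType) (act : I -> J -> {malg K[I]}).

(* right action of B on V_B, bilinear extension of act i j = v_i . b_j *)
Definition vactB (v : {malg K[I]}) (x : {malg K[J]}) : {malg K[I]} :=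
  \sum_(i <- msupp v) \sum_(j <- msupp x) (v@_i * x@_j) *: act i j.

Definition vact (w : {malg K[seq I]}) (A : {malg K[seq J]}) : {malg K[seq I]} :=
  \sum_(nu <- msupp w) \sum_(s <- msupp A)
     (w@_nu * A@_s) *: ptens [seq act p.1 p.2 | p <- zip nu s].

(* W = the B^{\otimes d}-submodule generated by the v_{mu.g}, g in Sigma_d
   (the orbit of mu under place permutations = rearrangements of mu) *)
Definition inW (d : nat) (mu : seq I) (w : {malg K[seq I]}) : Prop :=
  exists l : seq (seq I * {malg K[seq J]}),
    (forall p, p \in l -> perm_eq p.1 mu /\ homog d p.2) /\
    w = \sum_(p <- l) vact << p.1 >> p.2.
End Module.

Definition epsB {J : choiceType} (eps : J -> K) (x : {malg K[J]}) : K :=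
  \sum_(j <- msupp x) x@_j * eps j.
Definition epsT {J : choiceType} (eps : J -> K) (A : {malg K[seq J]}) : K :=
  \sum_(s <- msupp A) A@_s * \prod_(j <- s) eps j.

(* "The rule, together with the action of B^{\otimes d}, extends to a right
   A-module structure on W", A = B wr_Q H(d) with sigma = flip, rho = 0:
   there are K-linear endomorphisms h i of W (the action of H_i) obeying the
   rule on the generators v_nu and all defining relations of A, where
   B^{\otimes d} acts by vact.                                              *)
Definition extends_to_A_module {dI : Order.disp_t} (J : choiceType)
  (I : orderType dI) (mulb : J -> J -> {malg K[J]}) (oneB : {malg K[J]})
  (act : I -> J -> {malg K[I]}) (S R : {malg K[seq J]}) (d : nat)
  (mu : seq I) : Prop :=
  let W := inW act d mu in
  let Si i := emb oneB d i S in
  let Ri i := emb oneB d i R in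
  exists h : nat -> {malg K[seq I]} -> {malg K[seq I]},
  (forall i, (1 <= i <= d.-1)%N -> forall w, W w -> W (h i w)) /\
  (forall i, (1 <= i <= d.-1)%N -> forall (a : K) w w', W w -> W w' ->
      h i (a *: w + w') = a *: h i w + h i w') /\
  (forall i, (1 <= i <= d.-1)%N -> forall nu : seq I, perm_eq nu mu ->
      h i << nu >> =
        if ascentn i.-1 nu then << swapn i.-1 nu >>
        else vact act << swapn i.-1 nu >> (Ri i) + vact act << nu >> (Si i)) /\
  (forall k, (1 <= k)%N -> (k.+1 <= d.-1)%N -> forall w, W w ->
      h k (h k.+1 (h k w)) = h k.+1 (h k (h k.+1 w))) /\
  (forall i j, (1 <= i <= d.-1)%N -> (1 <= j <= d.-1)%N -> ((i.+1 < j) || (j.+1 < i))%N ->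
      forall w, W w -> h i (h j w) = h j (h i w)) /\
  (* H_i^2 = S_i H_i + R_i  (right action: w.(S_i H_i) = (w.S_i).H_i) *)
  (forall i, (1 <= i <= d.-1)%N -> forall w, W w ->
      h i (h i w) = h i (vact act w (Si i)) + vact act w (Ri i)) /\
  (* H_i b = sigma_i(b) H_i  (rho = 0) for all b in B^{\otimes d} *)
  (forall i, (1 <= i <= d.-1)%N -> forall b, homog d b -> forall w, W w ->
      vact act (h i w) b = h i (vact act w (sigma_i i b))).

End QWP.

(* Main.v *)
Require Import Defs.
From HB Require Import structures.
From mathcomp Require Import all_boot all_order all_algebra.
From mathcomp Require Import finmap monalg zify ring.
Import Order.TTheory GRing.Theory.
Local Open Scope fset_scope.
Local Open Scope ring_scope.

Section Lin.
Context {K : comNzRingType}.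

Definition linf {X : choiceType} {V : lmodType K} (f : {malg K[X]} -> V) :=
  forall c a b, f (c *: a + b) = c *: f a + f b.

Lemma malgZU {X : choiceType} (c : K) (k : X) : << c *g k >> = c *: << k >>.
Proof.
apply/malgP => k'; rewrite mcoeffZ !mcoeffU.
by case: (k == k'); rewrite /= ?mulr1n ?mulr0n ?mulr1 ?mulr0.
Qed.

Section L.
Context {X : choiceType} {V : lmodType K} {f : {malg K[X]} -> V} (fl : linf f).
Lemma lin0 : f 0 = 0.
Proof.
have := fl 1 0 0; rewrite scaler0 addr0 scale1r.
by move/(congr1 (fun x => x - f 0)); rewrite subrr addrK.
Qed.
Lemma linD a b : f (a + b) = f a + f b.
Proof. by have := fl 1 a b; rewrite !scale1r. Qed.
Lemma linZ c a : f (c *: a) = c *: f a.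
Proof. by have := fl c a 0; rewrite !addr0 lin0 addr0. Qed.
Lemma lin_sum (I : Type) (r : seq I) (F : I -> {malg K[X]}) :
  f (\sum_(i <- r) F i) = \sum_(i <- r) f (F i).
Proof.
elim: r => [|x r IH]; first by rewrite !big_nil lin0.
by rewrite !big_cons linD IH.
Qed.
Lemma lin_basis g : f g = \sum_(k <- msupp g) g@_k *: f << k >>.
Proof.
rewrite {1}[g]monalgE lin_sum; apply: eq_bigr => k _.
by rewrite malgZU linZ.
Qed.
End L.

Lemma lin_eq {X : choiceType} {V : lmodType K} {f g : {malg K[X]} -> V} :
  linf f -> linf g -> forall a, (forall k, k \in msupp a -> f << k >> = g << k >>) ->
  f a = g a.
Proof.
move=> fl gl a H; rewrite (lin_basis fl) (lin_basis gl).
by apply: eq_big_seq => k kin; rewrite H.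
Qed.

Definition lext {X : choiceType} {V : lmodType K} (F : X -> V) (g : {malg K[X]}) : V :=
  \sum_(k <- msupp g) g@_k *: F k.

Section Lext.
Context {X : choiceType} {V : lmodType K} (F : X -> V).
Lemma lextEw {g : {malg K[X]}} {dom : {fset X}} : msupp g `<=` dom ->
  lext F g = \sum_(k <- dom) g@_k *: F k.
Proof.
move=> le; rewrite /lext (big_fset_incl _ le) // => x xd /mcoeff_outdom ->.
by rewrite scale0r.
Qed.
Lemma lext_lin : linf (lext F).
Proof.
move=> c a b; set dom := msupp a `|` msupp b.
have h1 : msupp (c *: a + b) `<=` dom.
  exact: fsubset_trans (msuppD_le _ _) (fsetUSS (msuppZ_le _ _) (fsubset_refl _)).
rewrite (lextEw h1) (lextEw (fsubsetUl (msupp a) (msupp b)))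
        (lextEw (fsubsetUr (msupp a) (msupp b))).
rewrite scaler_sumr -big_split /=; apply: eq_bigr => k _.
by rewrite mcoeffD mcoeffZ scalerDl scalerA.
Qed.
Lemma lextU c k : lext F << c *g k >> = c *: F k.
Proof. by rewrite (lextEw msuppU_le) big_seq_fset1 mcoeffUU. Qed.
Lemma lextB k : lext F << k >> = F k.
Proof. by rewrite lextU scale1r. Qed.
End Lext.

Lemma lext_lin2 {X Y : choiceType} {V : lmodType K} (F : X -> {malg K[Y]} -> V)
  (x : {malg K[X]}) : (forall k, linf (F k)) -> linf (fun P => lext (fun k => F k P) x).
Proof.
move=> Fl c a b; rewrite /lext scaler_sumr -big_split /=; apply: eq_bigr => k _.
by rewrite Fl scalerDr !scalerA mulrC.
Qed.

Lemma lext_ext {X : choiceType} {V : lmodType K} (F G : X -> V) g :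
  (forall k, k \in msupp g -> F k = G k) -> lext F g = lext G g.
Proof. by move=> H; apply: eq_big_seq => k kin; rewrite H. Qed.

End Lin.

Section D.
Context {K : comNzRingType}.

Definition Cx {X : choiceType} (x : {malg K[X]}) (P : {malg K[seq X]}) : {malg K[seq X]} :=
  lext (fun j => lext (fun s => << j :: s >>) P) x.

Lemma ptens_cons {X : choiceType} (x : {malg K[X]}) l : ptens (x :: l) = Cx x (ptens l).
Proof.
rewrite /= /Cx /lext; apply: eq_bigr => j _; rewrite scaler_sumr; apply: eq_bigr => s _.
by rewrite malgZU scalerA.
Qed.

Lemma mapkeys_lext {X : choiceType} (f : seq X -> seq X) (A : {malg K[seq X]}) :
  mapkeys f A = lext (fun s => << f s >>) A.
Proof. by apply: eq_bigr => s _; rewrite malgZU. Qed.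

Lemma tcat_lext {X : choiceType} (A C : {malg K[seq X]}) :
  tcat A C = lext (fun s => lext (fun t => << s ++ t >>) C) A.
Proof.
rewrite /tcat /lext; apply: eq_bigr => j _; rewrite scaler_sumr; apply: eq_bigr => s _.
by rewrite malgZU scalerA.
Qed.

Lemma vact_lext {J I : choiceType} (act : I -> J -> {malg K[I]}) w A :
  vact act w A = lext (fun nu => lext (fun s => ptens [seq act p.1 p.2 | p <- zip nu s]) A) w.
Proof.
rewrite /vact /lext; apply: eq_bigr => j _; rewrite scaler_sumr; apply: eq_bigr => s _.
by rewrite scalerA.
Qed.

Lemma vactB_lext {J I : choiceType} (act : I -> J -> {malg K[I]}) v x :
  vactB act v x = lext (fun i => lext (fun j => act i j) x) v.
Proof.
rewrite /vactB /lext; apply: eq_bigr => j _; rewrite scaler_sumr; apply: eq_bigr => s _.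
by rewrite scalerA.
Qed.

Lemma Cx_lin1 {X : choiceType} (P : {malg K[seq X]}) : linf (fun x : {malg K[X]} => Cx x P).
Proof. exact: lext_lin. Qed.
Lemma Cx_lin2 {X : choiceType} (x : {malg K[X]}) : linf (Cx x).
Proof. by apply: (lext_lin2 (fun j P => lext (fun s => << j :: s >>) P)) => k; apply: lext_lin. Qed.
Lemma CxU {X : choiceType} (j : X) s : Cx << j >> << s >> = << j :: s >>.
Proof. by rewrite /Cx lextB lextB. Qed.

Lemma mapkeys_lin {X : choiceType} (f : seq X -> seq X) : linf (mapkeys (K:=K) f).
Proof. by move=> c a b; rewrite !mapkeys_lext lext_lin. Qed.
Lemma mapkeysU {X : choiceType} (f : seq X -> seq X) s : mapkeys f << s >> = << f s >> :> {malg K[seq X]}.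
Proof. by rewrite mapkeys_lext lextB. Qed.

Lemma tcat_lin1 {X : choiceType} (C : {malg K[seq X]}) : linf (fun A => tcat A C).
Proof. by move=> c a b; rewrite !tcat_lext lext_lin. Qed.
Lemma tcat_lin2 {X : choiceType} (A : {malg K[seq X]}) : linf (tcat A).
Proof. by move=> c a b; rewrite !tcat_lext; apply: (lext_lin2 (fun s C => lext (fun t => << s ++ t >>) C)) => k; apply: lext_lin. Qed.
Lemma tcatU {X : choiceType} (s t : seq X) : tcat << s >> << t >> = << s ++ t >> :> {malg K[seq X]}.
Proof. by rewrite tcat_lext !lextB. Qed.

Section Act.
Context {J I : choiceType} (act : I -> J -> {malg K[I]}).
Lemma vact_lin1 A : linf (fun w => vact act w A).
Proof. by move=> c a b; rewrite !vact_lext lext_lin. Qed.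
Lemma vact_lin2 w : linf (vact act w).
Proof. by move=> c a b; rewrite !vact_lext; apply: (lext_lin2 (fun nu A => lext (fun s => ptens [seq act p.1 p.2 | p <- zip nu s]) A)) => k; apply: lext_lin. Qed.
Lemma vactU nu s : vact act << nu >> << s >> = ptens [seq act p.1 p.2 | p <- zip nu s].
Proof. by rewrite vact_lext !lextB. Qed.
Lemma vactB_lin1 x : linf (fun v => vactB act v x).
Proof. by move=> c a b; rewrite !vactB_lext lext_lin. Qed.
Lemma vactB_lin2 v : linf (vactB act v).
Proof. by move=> c a b; rewrite !vactB_lext; apply: (lext_lin2 (fun i x => lext (fun j => act i j) x)) => k; apply: lext_lin. Qed.
Lemma vactBU i j : vactB act << i >> << j >> = act i j.
Proof. by rewrite vactB_lext !lextB. Qed.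
End Act.

Section Homog.
Context {X : choiceType}.
Implicit Types (A : {malg K[seq X]}).
Lemma homog0 n : homog n (0 : {malg K[seq X]}) :> Prop.
Proof. by move=> s; rewrite msupp0 in_fset0. Qed.
Lemma homogD n A C : homog n A -> homog n C -> homog n (A + C).
Proof.
move=> hA hC s /(fsubsetP (msuppD_le _ _)); rewrite in_fsetU => /orP[/hA|/hC] //.
Qed.
Lemma homogZ n c A : homog n A -> homog n (c *: A).
Proof. by move=> hA s /(fsubsetP (msuppZ_le _ _)) /hA. Qed.
Lemma homogU n (c : K) (s : seq X) : size s = n -> homog n << c *g s >>.
Proof. by move=> hs t /(fsubsetP msuppU_le); rewrite in_fset1 => /eqP ->. Qed.
Lemma homogU1 n (s : seq X) : size s = n -> homog (K:=K) n << s >>.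
Proof. exact: homogU. Qed.
Lemma homog_sum n (T : eqType) (r : seq T) (F : T -> {malg K[seq X]}) :
  (forall i, i \in r -> homog n (F i)) -> homog n (\sum_(i <- r) F i).
Proof.
elim: r => [|x r IH] H; first by rewrite big_nil; apply: homog0.
rewrite big_cons; apply: homogD; first by apply: H; rewrite inE eqxx.
by apply: IH => i ir; apply: H; rewrite inE ir orbT.
Qed.
End Homog.


Lemma homog_lext {X Y : choiceType} n (F : Y -> {malg K[seq X]}) (g : {malg K[Y]}) :
  (forall k, k \in msupp g -> homog n (F k)) -> homog n (lext F g).
Proof. by move=> H; apply: homog_sum => k kin; apply: homogZ; apply: H. Qed.

Lemma homog_ptens {X : choiceType} (l : seq {malg K[X]}) : homog (size l) (ptens l).
Proof.
elim: l => [|x l IH]; first exact: homogU1.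
rewrite ptens_cons /Cx; apply: homog_lext => j _; apply: homog_lext => s sin.
by apply: homogU1; rewrite /= (IH s sin).
Qed.

Lemma homog_tcat {X : choiceType} a b (A C : {malg K[seq X]}) :
  homog a A -> homog b C -> homog (a + b) (tcat A C).
Proof.
move=> hA hC; rewrite tcat_lext; apply: homog_lext => s sin; apply: homog_lext => t tin.
by apply: homogU1; rewrite size_cat (hA s sin) (hC t tin).
Qed.

Lemma homog_mapkeys {X : choiceType} n (f : seq X -> seq X) (A : {malg K[seq X]}) :
  (forall s, size (f s) = size s) -> homog n A -> homog n (mapkeys f A).
Proof.
move=> hf hA; rewrite mapkeys_lext; apply: homog_lext => s sin.
by apply: homogU1; rewrite hf (hA s sin).
Qed.

Lemma homog_vact {J I : choiceType} (act : I -> J -> {malg K[I]}) d w A :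
  homog d w -> homog d A -> homog d (vact act w A).
Proof.
move=> hw hA; rewrite vact_lext; apply: homog_lext => nu nin; apply: homog_lext => s sin.
have := homog_ptens [seq act p.1 p.2 | p <- zip nu s].
by rewrite size_map size_zip (hw nu nin) (hA s sin) minnn.
Qed.

Lemma homog_emb {J : choiceType} (oneB : {malg K[J]}) d i (Z : {malg K[seq J]}) :
  homog 2 Z -> (1 <= i <= d.-1)%N -> homog d (emb oneB d i Z).
Proof.
move=> hZ hi; have E : ((i.-1 + 2) + (d - i.+1))%N = d by lia.
rewrite -{1}E.
have h1 := homog_ptens (nseq (d - i.+1) oneB); rewrite size_nseq in h1.
have h2 := homog_ptens (nseq i.-1 oneB); rewrite size_nseq in h2.
rewrite /emb; apply: homog_tcat => //; exact: homog_tcat.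
Qed.

End D.

Section Seq.
Context {X : Type}.
Implicit Types (s : seq X).
Lemma size_swapn n s : size (swapn n s) = size s.
Proof.
elim: n s => [|n IH] [|x [|y s]] //=; by rewrite IH.
Qed.
Lemma swapnK n : involutive (@swapn X n).
Proof. elim: n => [|n IH] [|x [|y s]] //=; by rewrite ?IH //= IH. Qed.
Lemma swapn_map {Y : Type} (f : X -> Y) n s : swapn n (map f s) = map f (swapn n s).
Proof. elim: n s => [|n IH] [|x [|y s]] //=; by rewrite -?IH. Qed.
Lemma swapn_cat n p s : swapn (size p + n) (p ++ s) = p ++ swapn n s.
Proof. by elim: p => [|x p IH] //=; rewrite -IH. Qed.
Lemma swapn_small n s : (size s <= n.+1)%N -> swapn n s = s.
Proof. elim: n s => [|n IH] [|x [|y s]] //= H; rewrite IH //. Qed.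
Lemma swapn_comm m n s : (m.+1 < n)%N -> swapn m (swapn n s) = swapn n (swapn m s).
Proof.
elim: m n s => [|m IH] n s H.
  by case: n H => [|[|n]] // _; case: s => [|x [|y s]].
by case: n H => [|n] // H; case: s => [|x s] //=; rewrite IH.
Qed.
Lemma swapn_braid n s : (n.+3 <= size s)%N ->
  swapn n (swapn n.+1 (swapn n s)) = swapn n.+1 (swapn n (swapn n.+1 s)).
Proof.
elim: n s => [|n IH] [|x [|y [|z s]]] //= H; by rewrite IH.
Qed.
End Seq.

Lemma swapn_zip {X Y : Type} n (s : seq X) (t : seq Y) : size s = size t ->
  zip (swapn n s) (swapn n t) = swapn n (zip s t).
Proof.
elim: n s t => [|n IH] [|x s] [|a t] //= H.
  by case: s H => [|y s]; case: t => [|b t].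
by rewrite IH //; case: H.
Qed.

Lemma perm_swapn {X : eqType} n (s : seq X) : perm_eq (swapn n s) s.
Proof.
elim: n s => [|n IH] [|x s] //=.
  by case: s => [|y s] //; apply/permP => p /=; rewrite addnCA.
by rewrite perm_cons IH.
Qed.

Section Asc.
Context {dI : Order.disp_t} {I : orderType dI}.
Implicit Types (s : seq I).
Lemma ascentn_cat n (p s : seq I) : ascentn (size p + n) (p ++ s) = ascentn n s.
Proof. by elim: p => [|x p IH] //=; rewrite -IH. Qed.
Lemma ascentn_far m n s : (m.+1 < n)%N || (n.+1 < m)%N -> ascentn m (swapn n s) = ascentn m s.
Proof.
elim: m n s => [|m IH] n s H.
  by case: n H => [|[|n]] // _; case: s => [|x [|y s]].
case: n H => [|n] H.
  by case: m H IH => [|m] // H IH; case: s => [|x [|y s]].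
by case: s => [|x s] //=; rewrite IH.
Qed.
End Asc.

Section M.
Context {K : comNzRingType}.

Lemma lin_comp {X Y : choiceType} {V : lmodType K} {f : {malg K[X]} -> {malg K[Y]}} {g : {malg K[Y]} -> V} :
  linf f -> linf g -> linf (fun a => g (f a)).
Proof. by move=> fl gl c a b; rewrite fl gl. Qed.

Lemma lin_id {X : choiceType} : linf (fun a : {malg K[X]} => a).
Proof. by []. Qed.

Lemma lext_id {X : choiceType} (C : {malg K[X]}) : lext (fun t => << t >>) C = C.
Proof. by rewrite {2}[C]monalgE; apply: eq_bigr => t _; rewrite malgZU. Qed.

Lemma mapkeys_id_on {X : choiceType} (f : seq X -> seq X) (A : {malg K[seq X]}) :
  (forall s, s \in msupp A -> f s = s) -> mapkeys f A = A.
Proof.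
move=> H; apply: (lin_eq (mapkeys_lin f) lin_id) => s sin.
by rewrite mapkeysU H.
Qed.

Lemma tcatCx {X : choiceType} (x : {malg K[X]}) P Q : tcat (Cx x P) Q = Cx x (tcat P Q).
Proof.
apply: (lin_eq (f := fun x => tcat (Cx x P) Q) (g := fun x => Cx x (tcat P Q))).
- exact (lin_comp (Cx_lin1 P) (tcat_lin1 Q)).
- exact: Cx_lin1.
move=> j _.
apply: (lin_eq (f := fun P => tcat (Cx <<j>> P) Q) (g := fun P => Cx <<j>> (tcat P Q))).
- exact (lin_comp (Cx_lin2 _) (tcat_lin1 Q)).
- exact (lin_comp (tcat_lin1 Q) (Cx_lin2 _)).
move=> s _.
apply: (lin_eq (f := fun Q => tcat (Cx <<j>> <<s>>) Q) (g := fun Q => Cx <<j>> (tcat <<s>> Q))).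
- exact: tcat_lin2.
- exact (lin_comp (tcat_lin2 _) (Cx_lin2 _)).
by move=> t _; rewrite CxU !tcatU CxU.
Qed.

Lemma ptens_cat {X : choiceType} (a b : seq {malg K[X]}) : tcat (ptens a) (ptens b) = ptens (a ++ b).
Proof.
elim: a => [|x a IH]; first by rewrite /= tcat_lext lextB lext_id.
by rewrite cat_cons !ptens_cons tcatCx IH.
Qed.

Lemma ptens_units {X : choiceType} (nu : seq X) : ptens [seq << x >> | x <- nu] = << nu >> :> {malg K[seq X]}.
Proof. by elim: nu => [|x nu IH] //; rewrite map_cons ptens_cons IH CxU. Qed.

Section Act.
Context {J I : choiceType} (act : I -> J -> {malg K[I]}).

Lemma vact_Cx x nu y P : vact act << x :: nu >> (Cx y P) = Cx (vactB act << x >> y) (vact act << nu >> P).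
Proof.
apply: (lin_eq (f := fun y => vact act << x :: nu >> (Cx y P)) (g := fun y => Cx (vactB act << x >> y) (vact act << nu >> P))).
- exact (lin_comp (Cx_lin1 P) (vact_lin2 _ _)).
- exact (lin_comp (vactB_lin2 _ _) (Cx_lin1 _)).
move=> j _.
apply: (lin_eq (f := fun P => vact act << x :: nu >> (Cx <<j>> P)) (g := fun P => Cx (vactB act << x >> <<j>>) (vact act << nu >> P))).
- exact (lin_comp (Cx_lin2 _) (vact_lin2 _ _)).
- exact (lin_comp (vact_lin2 _ _) (Cx_lin2 _)).
move=> s _; rewrite CxU !vactU vactBU.
have -> : zip (x :: nu) (j :: s) = (x, j) :: zip nu s by [].
by rewrite map_cons ptens_cons.
Qed.

Lemma vact_ptens nu l : size nu = size l ->
  vact act << nu >> (ptens l) = ptens [seq vactB act << p.1 >> p.2 | p <- zip nu l].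
Proof.
elim: nu l => [|x nu IH] [|y l] //.
  by move=> _; rewrite vactU.
move=> e; have {}e : size nu = size l by case: e.
rewrite ptens_cons vact_Cx IH //.
by rewrite -[zip (x :: nu) (y :: l)]/((x, y) :: zip nu l) map_cons ptens_cons.
Qed.

Lemma vact_one (oneB : {malg K[J]}) (Vunit : forall v, vactB act v oneB = v) d nu :
  size nu = d -> vact act << nu >> (ptens (nseq d oneB)) = << nu >>.
Proof.
move=> <-; rewrite vact_ptens ?size_nseq // -[RHS]ptens_units; congr ptens.
by elim: nu => [|x nu IH] //=; rewrite Vunit IH.
Qed.

Lemma vact_oneW (oneB : {malg K[J]}) (Vunit : forall v, vactB act v oneB = v) d w :
  homog d w -> vact act w (ptens (nseq d oneB)) = w.
Proof.
move=> hw; apply: (lin_eq (f := fun w => vact act w (ptens (nseq d oneB))) (g := fun w => w)).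
- exact: vact_lin1.
- exact: lin_id.
by move=> nu nin; rewrite (vact_one _ Vunit) // hw.
Qed.
End Act.

Lemma mapkeys_Cx0 {X : choiceType} (x y : {malg K[X]}) P :
  mapkeys (swapn 0) (Cx x (Cx y P)) = Cx y (Cx x P).
Proof.
apply: (lin_eq (f := fun x => mapkeys (swapn 0) (Cx x (Cx y P))) (g := fun x => Cx y (Cx x P))).
- exact (lin_comp (Cx_lin1 _) (mapkeys_lin _)).
- exact (lin_comp (Cx_lin1 _) (Cx_lin2 _)).
move=> i _.
apply: (lin_eq (f := fun y => mapkeys (swapn 0) (Cx <<i>> (Cx y P))) (g := fun y => Cx y (Cx <<i>> P))).
- exact (lin_comp (Cx_lin1 _) (lin_comp (Cx_lin2 _) (mapkeys_lin _))).
- exact: Cx_lin1.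
move=> j _.
apply: (lin_eq (f := fun P => mapkeys (swapn 0) (Cx <<i>> (Cx <<j>> P))) (g := fun P => Cx <<j>> (Cx <<i>> P))).
- exact (lin_comp (Cx_lin2 _) (lin_comp (Cx_lin2 _) (mapkeys_lin _))).
- exact (lin_comp (Cx_lin2 _) (Cx_lin2 _)).
by move=> s _; rewrite !CxU mapkeysU.
Qed.

Lemma mapkeys_CxS {X : choiceType} n (x : {malg K[X]}) P :
  mapkeys (swapn n.+1) (Cx x P) = Cx x (mapkeys (swapn n) P).
Proof.
apply: (lin_eq (f := fun x => mapkeys (swapn n.+1) (Cx x P)) (g := fun x => Cx x (mapkeys (swapn n) P))).
- exact (lin_comp (Cx_lin1 _) (mapkeys_lin _)).
- exact: Cx_lin1.
move=> i _.
apply: (lin_eq (f := fun P => mapkeys (swapn n.+1) (Cx <<i>> P)) (g := fun P => Cx <<i>> (mapkeys (swapn n) P))).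
- exact (lin_comp (Cx_lin2 _) (mapkeys_lin _)).
- exact (lin_comp (mapkeys_lin _) (Cx_lin2 _)).
by move=> s _; rewrite CxU !mapkeysU CxU.
Qed.

Lemma ptens_swap {X : choiceType} n (l : seq {malg K[X]}) :
  mapkeys (swapn n) (ptens l) = ptens (swapn n l).
Proof.
elim: n l => [|n IH] l.
  case: l => [|x [|y l]].
  - by rewrite mapkeysU.
  - apply: mapkeys_id_on => s sin; apply: swapn_small.
    by rewrite (homog_ptens _ _ sin).
  - by rewrite !ptens_cons mapkeys_Cx0.
case: l => [|x l]; first by rewrite /= mapkeysU.
by rewrite ptens_cons mapkeys_CxS IH -ptens_cons.
Qed.

Lemma sigma_vact {J I : choiceType} (act : I -> J -> {malg K[I]}) {d} n w A :
  homog d w -> homog d A ->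
  mapkeys (swapn n) (vact act w A) = vact act (mapkeys (swapn n) w) (mapkeys (swapn n) A).
Proof.
move=> hw hA.
apply: (lin_eq (f := fun w => mapkeys (swapn n) (vact act w A)) (g := fun w => vact act (mapkeys (swapn n) w) (mapkeys (swapn n) A))).
- exact (lin_comp (vact_lin1 _ _) (mapkeys_lin _)).
- exact (lin_comp (mapkeys_lin _) (vact_lin1 _ _)).
move=> nu nin.
apply: (lin_eq (f := fun A => mapkeys (swapn n) (vact act <<nu>> A)) (g := fun A => vact act (mapkeys (swapn n) <<nu>>) (mapkeys (swapn n) A))).
- exact (lin_comp (vact_lin2 _ _) (mapkeys_lin _)).
- exact (lin_comp (mapkeys_lin _) (vact_lin2 _ _)).
move=> s sin; rewrite !mapkeysU !vactU ptens_swap swapn_map swapn_zip //.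
by rewrite (hw _ nin) (hA _ sin).
Qed.

End M.

Section W.
Context {K : comNzRingType}.

Lemma mapkeys_comp {X : choiceType} (f g : seq X -> seq X) (w : {malg K[seq X]}) :
  mapkeys f (mapkeys g w) = mapkeys (fun s => f (g s)) w.
Proof.
apply: (lin_eq (f := fun w => mapkeys f (mapkeys g w)) (g := mapkeys (fun s => f (g s)))).
- exact (lin_comp (mapkeys_lin _) (mapkeys_lin _)).
- exact: mapkeys_lin.
by move=> s _; rewrite !mapkeysU.
Qed.

Lemma mapkeys_ext_on {X : choiceType} (f g : seq X -> seq X) (w : {malg K[seq X]}) :
  (forall s, s \in msupp w -> f s = g s) -> mapkeys f w = mapkeys g w.
Proof.
move=> H; apply: (lin_eq (f := mapkeys f) (g := mapkeys g)); try exact: mapkeys_lin.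
by move=> s sin; rewrite !mapkeysU H.
Qed.

Lemma emb0 {J : choiceType} (oneB : {malg K[J]}) d i : emb oneB d i 0 = 0.
Proof. by rewrite /emb (lin0 (tcat_lin2 _)) (lin0 (tcat_lin1 _)). Qed.

Lemma emb_one {J : choiceType} (oneB : {malg K[J]}) d i : (1 <= i <= d.-1)%N ->
  emb oneB d i (ptens [:: oneB; oneB]) = ptens (nseq d oneB).
Proof.
move=> hi; rewrite /emb !ptens_cat.
have -> : [:: oneB; oneB] = nseq 2 oneB by [].
by rewrite -!nseqD; congr (ptens (nseq _ _)); lia.
Qed.

Section Act.
Context {J : choiceType} {dI : Order.disp_t} {I : orderType dI} (act : I -> J -> {malg K[I]}).

Lemma W_homog d mu w : size mu = d -> inW act d mu w -> homog d w.
Proof.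
move=> smu [l [Hl ->]]; apply: homog_sum => p pin; have [pm hp] := Hl p pin.
apply: homog_vact => //; apply: homogU1; by rewrite (perm_size pm).
Qed.

Lemma W0 d mu : inW act d mu 0.
Proof. by exists [::]; split => //; rewrite big_nil. Qed.

Lemma W_lin d mu (c : K) w w' : inW act d mu w -> inW act d mu w' -> inW act d mu (c *: w + w').
Proof.
move=> [l [Hl ->]] [l' [Hl' ->]].
exists ([seq (p.1, c *: p.2) | p <- l] ++ l'); split.
  move=> p; rewrite mem_cat => /orP[/mapP[q qin ->]|pin] /=; last exact: Hl'.
  by have [? ?] := Hl q qin; split => //; apply: homogZ.
rewrite big_cat big_map /= scaler_sumr; congr (_ + _); apply: eq_bigr => p _.
by rewrite (linZ (vact_lin2 _ _)).
Qed.

Lemma WU (oneB : {malg K[J]}) (Vunit : forall v, vactB act v oneB = v) d mu nu :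
  size mu = d -> perm_eq nu mu -> inW act d mu << nu >>.
Proof.
move=> smu pm; exists [:: (nu, ptens (nseq d oneB))]; split.
  move=> p; rewrite inE => /eqP -> /=; split => //.
  by have := homog_ptens (nseq d oneB); rewrite size_nseq.
by rewrite big_seq1 /= (vact_one _ _ Vunit) // (perm_size pm).
Qed.
End Act.
End W.

Section E.
Context {K : comNzRingType}.

Lemma lin_add {X : choiceType} {V : lmodType K} (f g : {malg K[X]} -> V) :
  linf f -> linf g -> linf (fun a => f a + g a).
Proof.
move=> fl gl c a b; rewrite fl gl scalerDr.
by rewrite -!addrA; congr (_ + _); rewrite addrCA.
Qed.
Lemma lin_scale {X : choiceType} {V : lmodType K} (f : {malg K[X]} -> V) (k : K) :
  linf f -> linf (fun a => k *: f a).
Proof. by move=> fl c a b; rewrite fl scalerDr !scalerA mulrC. Qed.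
Lemma lin_smul {X : choiceType} {V : lmodType K} (f : {malg K[X]} -> K^o) (v : V) :
  linf f -> linf (fun a => f a *: v).
Proof. by move=> fl c a b; rewrite fl scalerDl scalerA. Qed.
Lemma lin_mulr {X : choiceType} (f : {malg K[X]} -> K^o) (k : K) :
  linf f -> linf (V := K^o) (fun a => f a * k).
Proof. by move=> fl c a b; rewrite fl mulrDl /GRing.scale /= mulrA. Qed.
Lemma lin_mull {X : choiceType} (f : {malg K[X]} -> K^o) (k : K) :
  linf f -> linf (V := K^o) (fun a => k * f a).
Proof. by move=> fl c a b; rewrite fl mulrDr /GRing.scale /= mulrCA. Qed.

Section Eps.
Context {J : choiceType} (eps : J -> K).

Lemma epsT_lin : linf (V := K^o) (epsT eps).
Proof. exact: (lext_lin (V := K^o) (fun s => \prod_(j <- s) eps j)). Qed.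
Lemma epsB_lin : linf (V := K^o) (epsB eps).
Proof. exact: (lext_lin (V := K^o) eps). Qed.
Lemma epsTU s : epsT eps << s >> = \prod_(j <- s) eps j.
Proof. exact: (lextB (V := K^o) (fun s => \prod_(j <- s) eps j)). Qed.
Lemma epsBU j : epsB eps << j >> = eps j.
Proof. exact: (lextB (V := K^o) eps). Qed.

Lemma epsT_Cx x P : epsT eps (Cx x P) = epsB eps x * epsT eps P.
Proof.
apply: (lin_eq (V := K^o) (f := fun x => epsT eps (Cx x P)) (g := fun x => epsB eps x * epsT eps P)).
- exact (lin_comp (Cx_lin1 _) epsT_lin).
- exact: lin_mulr epsB_lin.
move=> j _.
apply: (lin_eq (V := K^o) (f := fun P => epsT eps (Cx <<j>> P)) (g := fun P => epsB eps <<j>> * epsT eps P)).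
- exact (lin_comp (Cx_lin2 _) epsT_lin).
- exact: lin_mull epsT_lin.
by move=> s _; rewrite CxU !epsTU epsBU big_cons.
Qed.

Lemma epsT_ptens l : epsT eps (ptens l) = \prod_(x <- l) epsB eps x.
Proof.
elim: l => [|x l IH]; first by rewrite big_nil /= epsTU big_nil.
by rewrite ptens_cons epsT_Cx IH big_cons.
Qed.

Lemma epsT_tcat A C : epsT eps (tcat A C) = epsT eps A * epsT eps C.
Proof.
apply: (lin_eq (V := K^o) (f := fun A => epsT eps (tcat A C)) (g := fun A => epsT eps A * epsT eps C)).
- exact (lin_comp (tcat_lin1 _) epsT_lin).
- exact: lin_mulr epsT_lin.
move=> s _.
apply: (lin_eq (V := K^o) (f := fun C => epsT eps (tcat <<s>> C)) (g := fun C => epsT eps <<s>> * epsT eps C)).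
- exact (lin_comp (tcat_lin2 _) epsT_lin).
- exact: lin_mull epsT_lin.
by move=> t _; rewrite tcatU !epsTU big_cat.
Qed.

Lemma epsT_emb oneB (h1 : epsB eps oneB = 1) d i Z : epsT eps (emb oneB d i Z) = epsT eps Z.
Proof.
have P1 n : epsT eps (ptens (nseq n oneB)) = 1.
  by rewrite epsT_ptens big1_seq // => x /andP[_ /nseqP[-> _]].
by rewrite /emb !epsT_tcat !P1 mul1r mulr1.
Qed.

Lemma epsT_swap n A : epsT eps (mapkeys (swapn n) A) = epsT eps A.
Proof.
apply: (lin_eq (V := K^o) (f := fun A => epsT eps (mapkeys (swapn n) A)) (g := epsT eps)).
- exact (lin_comp (mapkeys_lin _) epsT_lin).
- exact: epsT_lin.
by move=> s _; rewrite mapkeysU !epsTU (perm_big _ (perm_swapn n s)).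
Qed.

Section Act.
Context {I : choiceType} (act : I -> J -> {malg K[I]}) (hact : forall i j, act i j = eps j *: << i >>).

Lemma ptens_scaled (nu : seq I) (s : seq J) : size nu = size s ->
  ptens [seq act p.1 p.2 | p <- zip nu s] = (\prod_(j <- s) eps j) *: << nu >>.
Proof.
elim: nu s => [|x nu IH] [|j s] //.
  by move=> _; rewrite big_nil scale1r.
move=> e; have {}e : size nu = size s by case: e.
rewrite -[zip (x :: nu) (j :: s)]/((x, j) :: zip nu s) map_cons ptens_cons IH //.
by rewrite /= hact (linZ (Cx_lin1 _)) (linZ (Cx_lin2 _)) CxU scalerA big_cons.
Qed.

Lemma vact_counit nu A : homog (size nu) A -> vact act << nu >> A = epsT eps A *: << nu >>.
Proof.
move=> hA.
apply: (lin_eq (f := vact act << nu >>) (g := fun A => epsT eps A *: << nu >>)).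
- exact: vact_lin2.
- exact: lin_smul epsT_lin.
by move=> s sin; rewrite vactU ptens_scaled ?epsTU // (hA s sin).
Qed.

Lemma vact_counitW d w A : homog d w -> homog d A -> vact act w A = epsT eps A *: w.
Proof.
move=> hw hA.
apply: (lin_eq (f := fun w => vact act w A) (g := fun w => epsT eps A *: w)).
- exact: vact_lin1.
- exact: lin_scale lin_id.
by move=> nu nin; rewrite vact_counit // (hw nu nin).
Qed.
End Act.
End Eps.
End E.

Definition sel {A : Type} (b : bool) (x y : A) := if b then x else y.
Lemma iftrue {A : Type} (x y : A) : sel true x y = x. Proof. by []. Qed.
Lemma iffalse {A : Type} (x y : A) : sel false x y = y. Proof. by []. Qed.

Section Abs.
Context {K : comNzRingType} {V : lmodType K} (eR eS : K) {T : eqType}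
  (coef : T -> V -> K)
  (cD : forall t u v, coef t (u + v) = coef t u + coef t v)
  (cZ : forall t c u, coef t (c *: u) = c * coef t u)
  (sep : forall u v, (forall t, coef t u = coef t v) -> u = v).

Lemma braid_abs {dI : Order.disp_t} {I : orderType dI} (f g : V -> V)
  (fD : forall u v, f (u + v) = f u + f v) (fZ : forall c u, f (c *: u) = c *: f u)
  (gD : forall u v, g (u + v) = g u + g v) (gZ : forall c u, g (c *: u) = c *: g u)
  (key : I -> I -> I -> T) (e : I -> I -> I -> V)
  (ce : forall t a b c, coef t (e a b c) = (key a b c == t)%:R)
  (H1 : forall a b c, f (e a b c) = sel (a < b)%O (e b a c) (eR *: e b a c + eS *: e a b c))
  (H2 : forall a b c, g (e a b c) = sel (b < c)%O (e a c b) (eR *: e a c b + eS *: e a b c))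
  x y z : x != y -> x != z -> y != z ->
  f (g (f (e x y z))) = g (f (g (e x y z))).
Proof.
move=> xy xz yz.
case/orP: (lt_total xy) => cxy; case/orP: (lt_total yz) => cyz; case/orP: (lt_total xz) => cxz;
  try (by move: (lt_trans cxy cyz); rewrite (lt_gtF cxz));
  try (by move: (lt_trans cyz cxy); rewrite (lt_gtF cxz));
  rewrite !(H1, H2, fD, gD, fZ, gZ,
            cxy, cyz, cxz, lt_gtF cxy, lt_gtF cyz, lt_gtF cxz, iftrue, iffalse);
  first [reflexivity | (apply: sep => t; rewrite !(cD, cZ, ce); ring)].
Qed.

Lemma quad_abs {dI : Order.disp_t} {I : orderType dI} (f : V -> V)
  (fD : forall u v, f (u + v) = f u + f v) (fZ : forall c u, f (c *: u) = c *: f u)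
  (key : I -> I -> T) (e : I -> I -> V)
  (ce : forall t a b, coef t (e a b) = (key a b == t)%:R)
  (H1 : forall a b, f (e a b) = sel (a < b)%O (e b a) (eR *: e b a + eS *: e a b))
  x y : x != y ->
  f (f (e x y)) = eS *: f (e x y) + eR *: e x y.
Proof.
move=> xy.
case/orP: (lt_total xy) => cxy;
  rewrite !(H1, fD, fZ, cxy, lt_gtF cxy, iftrue, iffalse);
  apply: sep => t; rewrite !(cD, cZ, ce); ring.
Qed.

Lemma far_abs (f g : V -> V)
  (fD : forall u v, f (u + v) = f u + f v) (fZ : forall c u, f (c *: u) = c *: f u)
  (gD : forall u v, g (u + v) = g u + g v) (gZ : forall c u, g (c *: u) = c *: g u)
  (key : bool -> bool -> T) (e : bool -> bool -> V)
  (ce : forall t a b, coef t (e a b) = (key a b == t)%:R)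
  (af ag : bool)
  (H1 : forall b, f (e false b) = sel af (e true b) (eR *: e true b + eS *: e false b))
  (H2 : forall a, g (e a false) = sel ag (e a true) (eR *: e a true + eS *: e a false)) :
  f (g (e false false)) = g (f (e false false)).
Proof.
case: af H1 => H1; case: ag H2 => H2;
  rewrite !(H1, H2, fD, gD, fZ, gZ, iftrue, iffalse);
  first [reflexivity | (apply: sep => t; rewrite !(cD, cZ, ce); ring)].
Qed.
End Abs.

Section PA.
Context {K : comNzRingType} {J : choiceType} (oneB : {malg K[J]})
  {dI : Order.disp_t} {I : orderType dI} (act : I -> J -> {malg K[I]})
  (Vunit : forall v, vactB act v oneB = v)
  (eps : J -> K) (heps1 : epsB eps oneB = 1) (hact : forall i j, act i j = eps j *: << i >>)
  (d : nat) (mu : seq I) (size_mu : size mu = d).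

Lemma W_decomp w : inW act d mu w ->
  exists l : seq (seq I * K), (forall p, p \in l -> perm_eq p.1 mu) /\ w = \sum_(p <- l) p.2 *: << p.1 >>.
Proof.
move=> [l [Hl ->]]; exists [seq (p.1, epsT eps p.2) | p <- l]; split.
  by move=> p /mapP[q qin ->] /=; have [] := Hl q qin.
rewrite big_map; apply: eq_big_seq => p pin /=; have [pm hp] := Hl p pin.
by rewrite (vact_counit _ _ hact) // (perm_size pm) size_mu.
Qed.

Lemma W_eq (V : lmodType K) (f g : {malg K[seq I]} -> V) : linf f -> linf g ->
  (forall nu, perm_eq nu mu -> f << nu >> = g << nu >>) -> forall w, inW act d mu w -> f w = g w.
Proof.
move=> fl gl H w /W_decomp [l [Hl ->]].
rewrite (lin_sum fl) (lin_sum gl); apply: eq_big_seq => p pin.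
by rewrite (linZ fl) (linZ gl) H // Hl.
Qed.

Lemma W_sum (l : seq (seq I * K)) (F : seq I -> {malg K[seq I]}) :
  (forall p, p \in l -> inW act d mu (F p.1)) -> inW act d mu (\sum_(p <- l) p.2 *: F p.1).
Proof.
elim: l => [|p l IH] H; first by rewrite big_nil; apply: W0.
rewrite big_cons; apply: W_lin; first by apply: H; rewrite inE eqxx.
by apply: IH => q ql; apply: H; rewrite inE ql orbT.
Qed.

Lemma WUa nu : perm_eq nu mu -> inW act d mu << nu >>.
Proof. exact: (WU act oneB Vunit d mu nu size_mu). Qed.

Lemma Wadd w w' : inW act d mu w -> inW act d mu w' -> inW act d mu (w + w').
Proof. by move=> h1 h2; have := W_lin act d mu 1 w w' h1 h2; rewrite scale1r. Qed.
Lemma Wscale c w : inW act d mu w -> inW act d mu (c *: w).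
Proof. by move=> h1; have := W_lin act d mu c w 0 h1 (W0 act d mu); rewrite addr0. Qed.


Section H.
Context (eR eS : K).
Definition T i (nu : seq I) : {malg K[seq I]} :=
  if ascentn i.-1 nu then << swapn i.-1 nu >> else eR *: << swapn i.-1 nu >> + eS *: << nu >>.
Definition h i := lext (T i).
Lemma hlin i : linf (h i). Proof. exact: lext_lin. Qed.
Lemma hU i nu : h i << nu >> = T i nu. Proof. exact: lextB. Qed.

Lemma T_inW i nu : perm_eq nu mu -> inW act d mu (T i nu).
Proof.
move=> pm; have pm' : perm_eq (swapn i.-1 nu) mu by exact: perm_trans (perm_swapn _ _) pm.
rewrite /T; case: ifP => _; first exact: WUa.
by apply: Wadd; apply: Wscale; apply: WUa.
Qed.

Lemma h_inW i w : inW act d mu w -> inW act d mu (h i w).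
Proof.
move=> /W_decomp [l [Hl ->]]; rewrite (lin_sum (hlin i)).
have -> : \sum_(p <- l) h i (p.2 *: << p.1 >>) = \sum_(p <- l) p.2 *: T i p.1.
  by apply: eq_bigr => p _; rewrite (linZ (hlin i)) hU.
by apply: W_sum => p pin; apply: T_inW; apply: Hl.
Qed.

Lemma Tcat n (pre : seq I) a b r : size pre = n ->
  T n.+1 (pre ++ a :: b :: r) =
  if (a < b)%O then << pre ++ b :: a :: r >> else eR *: << pre ++ b :: a :: r >> + eS *: << pre ++ a :: b :: r >>.
Proof.
move=> <-; rewrite /T /=.
have E1 := swapn_cat 0 pre (a :: b :: r); rewrite addn0 in E1.
have E2 := ascentn_cat 0 pre (a :: b :: r); rewrite addn0 in E2.
by rewrite E1 E2.
Qed.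


Lemma decomp_nu n (nu : seq I) : (n < size nu)%N ->
  exists pre a r, size pre = n /\ nu = pre ++ a :: r.
Proof.
move=> hn; exists (take n nu); case E: (drop n nu) => [|a r].
  by move: (size_drop n nu); rewrite E /=; lia.
exists a, r; split; first by rewrite size_take hn.
by rewrite -E cat_take_drop.
Qed.

Lemma braid_basis k : (1 <= k)%N -> (k.+1 <= d.-1)%N -> forall nu, perm_eq nu mu -> uniq nu ->
  h k (h k.+1 (h k << nu >>)) = h k.+1 (h k (h k.+1 << nu >>)).
Proof.
move=> hk1 hk2 nu pm un.
have snu : size nu = d by rewrite (perm_size pm).
have hlt : (k.-1 < size nu)%N by rewrite snu; lia.
have [pre [x [r [spre Enu]]]] := decomp_nu _ _ hlt.
case: r Enu => [|y [|z post]] Enu.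
- by move: snu; rewrite Enu size_cat spre /=; lia.
- by move: snu; rewrite Enu size_cat spre /=; lia.
move: un; rewrite Enu cat_uniq => /and3P[_ _] /=.
rewrite !inE !negb_or => /andP[/and3P[xy xz _] /andP[/andP[yz _] _]].
have Ek : k = k.-1.+1 by lia.
have H1 a b c : h k << pre ++ [:: a, b, c & post] >> =
   sel (a < b)%O << pre ++ [:: b, a, c & post] >> (eR *: << pre ++ [:: b, a, c & post] >> + eS *: << pre ++ [:: a, b, c & post] >>).
  by rewrite hU {1}Ek Tcat.
have H2 a b c : h k.+1 << pre ++ [:: a, b, c & post] >> =
   sel (b < c)%O << pre ++ [:: a, c, b & post] >> (eR *: << pre ++ [:: a, c, b & post] >> + eS *: << pre ++ [:: a, b, c & post] >>).
  have sr : size (rcons pre a) = k by rewrite size_rcons spre; lia.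
  by rewrite hU -cat_rcons (Tcat _ _ _ _ _ sr) !cat_rcons.
apply: (braid_abs eR eS (fun t (u : {malg K[seq I]}) => u@_t) _ _ _ (h k) (h k.+1) _ _ _ _
   (fun a b c => pre ++ [:: a, b, c & post]) (fun a b c => << pre ++ [:: a, b, c & post] >>) _ H1 H2 x y z xy xz yz).
- by move=> t u v; rewrite mcoeffD.
- by move=> t c u; rewrite mcoeffZ.
- by move=> u v H; apply/malgP.
- exact: (linD (hlin k)).
- exact: (linZ (hlin k)).
- exact: (linD (hlin k.+1)).
- exact: (linZ (hlin k.+1)).
- by move=> t a b c; rewrite mcoeffU.
Qed.


Lemma quad_basis i : (1 <= i <= d.-1)%N -> forall nu, perm_eq nu mu -> uniq nu ->
  h i (h i << nu >>) = eS *: h i << nu >> + eR *: << nu >>.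
Proof.
move=> hi nu pm un.
have snu : size nu = d by rewrite (perm_size pm).
have hlt : (i.-1 < size nu)%N by rewrite snu; lia.
have [pre [x [r [spre Enu]]]] := decomp_nu _ _ hlt.
case: r Enu => [|y post] Enu.
  by move: snu; rewrite Enu size_cat spre /=; lia.
move: un; rewrite Enu cat_uniq => /and3P[_ _] /=.
rewrite !inE !negb_or => /andP[/andP[xy _] _].
have Ei : i = i.-1.+1 by lia.
have H1 a b : h i << pre ++ [:: a, b & post] >> =
   sel (a < b)%O << pre ++ [:: b, a & post] >> (eR *: << pre ++ [:: b, a & post] >> + eS *: << pre ++ [:: a, b & post] >>).
  by rewrite hU {1}Ei Tcat.
apply: (quad_abs eR eS (fun t (u : {malg K[seq I]}) => u@_t) _ _ _ (h i) _ _
   (fun a b => pre ++ [:: a, b & post]) (fun a b => << pre ++ [:: a, b & post] >>) _ H1 x y xy).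
- by move=> t u v; rewrite mcoeffD.
- by move=> t c u; rewrite mcoeffZ.
- by move=> u v H; apply/malgP.
- exact: (linD (hlin i)).
- exact: (linZ (hlin i)).
- by move=> t a b; rewrite mcoeffU.
Qed.

Lemma far_basis i j : (1 <= i)%N -> (1 <= j)%N -> (i.+1 < j)%N || (j.+1 < i)%N -> forall nu,
  h i (h j << nu >>) = h j (h i << nu >>).
Proof.
move=> hi hj hij nu.
have f1 : (i.-1.+1 < j.-1)%N || (j.-1.+1 < i.-1)%N by lia.
have f2 : (j.-1.+1 < i.-1)%N || (i.-1.+1 < j.-1)%N by lia.
have cm : swapn j.-1 (swapn i.-1 nu) = swapn i.-1 (swapn j.-1 nu).
  by case/orP: f1 => hf; rewrite (swapn_comm _ _ _ hf).
pose key (a b : bool) := (if a then swapn i.-1 else id) ((if b then swapn j.-1 else id) nu).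
have H1 b : h i << key false b >> =
  sel (ascentn i.-1 nu) << key true b >> (eR *: << key true b >> + eS *: << key false b >>).
  by rewrite hU /T; case: b; rewrite /key /= ?(ascentn_far _ _ _ f1).
have H2 a : h j << key a false >> =
  sel (ascentn j.-1 nu) << key a true >> (eR *: << key a true >> + eS *: << key a false >>).
  by rewrite hU /T; case: a; rewrite /key /= ?(ascentn_far _ _ _ f2) ?cm.
apply: (far_abs eR eS (fun t (u : {malg K[seq I]}) => u@_t) _ _ _ (h i) (h j) _ _ _ _
   key (fun a b => << key a b >>) _ _ _ H1 H2).
- by move=> t u v; rewrite mcoeffD.
- by move=> t c u; rewrite mcoeffZ.
- by move=> u v H; apply/malgP.
- exact: (linD (hlin i)).
- exact: (linZ (hlin i)).
- exact: (linD (hlin j)).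
- exact: (linZ (hlin j)).
- by move=> t a b; rewrite mcoeffU.
Qed.

End H.
End PA.

Lemma partA (K : comNzRingType) (J : choiceType) (mulb : J -> J -> {malg K[J]}) (oneB : {malg K[J]})
  (dI : Order.disp_t) (I : orderType dI) (act : I -> J -> {malg K[I]})
  (Vunit : forall v, vactB act v oneB = v)
  (S R : {malg K[seq J]}) (homS : homog 2 S) (homR : homog 2 R)
  (d : nat) (mu : seq I) (size_mu : size mu = d) (mu_incr : sorted (fun x y => (x < y)%O) mu)
  (eps : J -> K) (heps1 : epsB eps oneB = 1) (hact : forall i j, act i j = eps j *: << i >>) :
  extends_to_A_module mulb oneB act S R d mu.
Proof.
set eR := epsT eps R; set eS := epsT eps S.
have hW := W_homog act d mu _ size_mu.
have umu : uniq mu := lt_sorted_uniq mu_incr.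
have Weq := W_eq act eps hact d mu size_mu.
have hRi i : (1 <= i <= d.-1)%N -> homog d (emb oneB d i R) by move=> hi; apply: homog_emb.
have hSi i : (1 <= i <= d.-1)%N -> homog d (emb oneB d i S) by move=> hi; apply: homog_emb.
exists (h eR eS); split.
  by move=> i _ w Ww; apply: (h_inW oneB act Vunit eps hact d mu size_mu).
split.
  by move=> i _ a w w' _ _; rewrite hlin.
split.
  move=> i hi nu pm; rewrite hU /T; case: ifP => // _.
  have sn : size nu = d by rewrite (perm_size pm).
  have hR' : homog (size (swapn i.-1 nu)) (emb oneB d i R) by rewrite size_swapn sn; exact: hRi.
  have hS' : homog (size nu) (emb oneB d i S) by rewrite sn; exact: hSi.
  rewrite (vact_counit _ _ hact _ _ hR') (vact_counit _ _ hact _ _ hS').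
  by rewrite !(epsT_emb _ _ heps1).
split.
  move=> k hk1 hk2 w Ww.
  apply: (Weq _ (fun w => h eR eS k (h eR eS k.+1 (h eR eS k w)))
                (fun w => h eR eS k.+1 (h eR eS k (h eR eS k.+1 w)))) => //.
  - exact: (lin_comp (hlin _ _ _) (lin_comp (hlin _ _ _) (hlin _ _ _))).
  - exact: (lin_comp (hlin _ _ _) (lin_comp (hlin _ _ _) (hlin _ _ _))).
  move=> nu pm; apply: (braid_basis d mu size_mu) => //.
  by rewrite (perm_uniq pm).
split.
  move=> i j hi hj hij w Ww.
  apply: (Weq _ (fun w => h eR eS i (h eR eS j w)) (fun w => h eR eS j (h eR eS i w))) => //.
  - exact: (lin_comp (hlin _ _ _) (hlin _ _ _)).
  - exact: (lin_comp (hlin _ _ _) (hlin _ _ _)).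
  move=> nu _; apply: (far_basis d mu size_mu) => //.
  - by case/andP: hi.
  - by case/andP: hj.
split.
  move=> i hi w Ww.
  have hw := hW w Ww.
  have e1 : vact act w (emb oneB d i S) = eS *: w.
    by rewrite (vact_counitW _ _ hact d _ _ hw (hSi i hi)) (epsT_emb _ _ heps1).
  have e2 : vact act w (emb oneB d i R) = eR *: w.
    by rewrite (vact_counitW _ _ hact d _ _ hw (hRi i hi)) (epsT_emb _ _ heps1).
  rewrite e1 e2 (linZ (hlin _ _ _)).
  apply: (Weq _ (fun w => h eR eS i (h eR eS i w)) (fun w => eS *: h eR eS i w + eR *: w)) => //.
  - exact: (lin_comp (hlin _ _ _) (hlin _ _ _)).
  - exact (lin_add _ _ (lin_scale _ eS (hlin _ _ _)) (lin_scale _ eR lin_id)).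
  move=> nu pm; apply: (quad_basis d mu size_mu) => //.
  by rewrite (perm_uniq pm).
move=> i hi b hb w Ww.
have hw := hW w Ww.
have hw' := hW _ (h_inW oneB act Vunit eps hact d mu size_mu eR eS i w Ww).
have hsb : homog d (sigma_i i b) by apply: homog_mapkeys => // s; rewrite size_swapn.
rewrite !(vact_counitW _ _ hact d) // (linZ (hlin _ _ _)).
by rewrite /sigma_i epsT_swap.
Qed.

Lemma partB (K : comNzRingType) (J : choiceType) (mulb : J -> J -> {malg K[J]}) (oneB : {malg K[J]})
  (dI : Order.disp_t) (I : orderType dI) (act : I -> J -> {malg K[I]})
  (Vunit : forall v, vactB act v oneB = v)
  (S R : {malg K[seq J]}) (d : nat) (hd : (2 <= d)%N) (mu : seq I) (size_mu : size mu = d) :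
  S = 0 -> R = ptens [:: oneB; oneB] -> extends_to_A_module mulb oneB act S R d mu.
Proof.
move=> -> ->; rewrite /extends_to_A_module.
exists (fun i w => mapkeys (swapn i.-1) w).
have hW := @W_homog _ _ _ _ act d mu _ size_mu.
split.
  move=> i hi w [l [Hl ->]].
  exists [seq (swapn i.-1 p.1, mapkeys (swapn i.-1) p.2) | p <- l]; split.
    move=> p /mapP[q qin ->] /=; have [pm hq] := Hl q qin; split.
      exact: perm_trans (perm_swapn _ _) pm.
    by apply: homog_mapkeys => // s; rewrite size_swapn.
  rewrite (lin_sum (mapkeys_lin _)) big_map; apply: eq_big_seq => p pin.
  have [pm hq] := Hl p pin.
  rewrite (sigma_vact _ (d:=d)) ?mapkeysU //; apply: homogU1; by rewrite (perm_size pm).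
split.
  by move=> i _ a w w' _ _; rewrite mapkeys_lin.
split.
  move=> i hi nu pm; rewrite mapkeysU; case: ifP => // _.
  rewrite !emb0 (lin0 (vact_lin2 _ _)) addr0 emb_one // (vact_one _ _ Vunit) //.
  by rewrite size_swapn (perm_size pm).
split.
  move=> k hk1 hk2 w Ww; rewrite !mapkeys_comp; apply: mapkeys_ext_on => s sin.
  have := hW w Ww s sin => ss; have -> : k.+1.-1 = k.-1.+1 by lia.
  apply: swapn_braid; lia.
split.
  move=> i j hi hj hij w Ww; rewrite !mapkeys_comp; apply: mapkeys_ext_on => s sin.
  case/orP: hij => h.
    apply: swapn_comm; lia.
  symmetry; apply: swapn_comm; lia.
split.
  move=> i hi w Ww; rewrite mapkeys_comp emb0 (lin0 (vact_lin2 _ _)) (lin0 (mapkeys_lin _)) add0r.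
  rewrite emb_one // (vact_oneW _ _ Vunit _ _ (hW w Ww)).
  by apply: mapkeys_id_on => s _; rewrite swapnK.
move=> i hi b hb w Ww.
have hsb : homog d (sigma_i i b) by apply: homog_mapkeys => // s; rewrite size_swapn.
rewrite /sigma_i (sigma_vact _ (d:=d)) //; last exact: hW.
rewrite mapkeys_comp; congr (vact _ _ _); apply: esym; apply: mapkeys_id_on => s _; exact: swapnK.
Qed.

Theorem proposition7p3
  (K : comNzRingType)
  (* B: free K-module with basis (b_j)_{j in J}, associative unital *)
  (J : choiceType) (mulb : J -> J -> {malg K[J]}) (oneB : {malg K[J]})
  (Bassoc : forall x y z : {malg K[J]},
     bmul mulb (bmul mulb x y) z = bmul mulb x (bmul mulb y z))
  (Bunitl : forall x, bmul mulb oneB x = x)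
  (Bunitr : forall x, bmul mulb x oneB = x)
  (* V_B: right B-module with K-basis (v_i)_{i in I}, I totally ordered *)
  (dI : Order.disp_t) (I : orderType dI) (act : I -> J -> {malg K[I]})
  (Vassoc : forall (v : {malg K[I]}) x y,
     vactB act (vactB act v x) y = vactB act v (bmul mulb x y))
  (Vunit : forall v, vactB act v oneB = v)
  (* parameters S, R in B (x) B; sigma = flip; rho = 0 *)
  (S R : {malg K[seq J]}) (homS : homog 2 S) (homR : homog 2 R)
  (* (C3) *)
  (C3a : tmul mulb (sigma_i 1 S) S + sigma_i 1 R = tmul mulb S S + R)
  (C3b : tmul mulb (sigma_i 1 S) R = tmul mulb S R)
  (* (C4) *)
  (C4a : forall a, homog 2 a ->
     tmul mulb (sigma_i 1 (sigma_i 1 a)) S = tmul mulb S (sigma_i 1 a))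
  (C4b : forall a, homog 2 a ->
     tmul mulb (sigma_i 1 (sigma_i 1 a)) R = tmul mulb R a)
  (* (C8) in B^{(x)3} *)
  (C8S1 : emb oneB 3 1 S = sigma_i 2 (sigma_i 1 (emb oneB 3 2 S)))
  (C8S2 : emb oneB 3 2 S = sigma_i 1 (sigma_i 2 (emb oneB 3 1 S)))
  (C8R1 : emb oneB 3 1 R = sigma_i 2 (sigma_i 1 (emb oneB 3 2 R)))
  (C8R2 : emb oneB 3 2 R = sigma_i 1 (sigma_i 2 (emb oneB 3 1 R)))
  (d : nat) (hd : (2 <= d)%N)
  (mu : seq I) (size_mu : size mu = d) (mu_incr : sorted (fun x y => (x < y)%O) mu) :
  (* (a) *)
  (forall eps : J -> K,
     (forall j j', epsB eps (mulb j j') = eps j * eps j') ->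
     epsB eps oneB = 1 ->
     (forall i j, act i j = eps j *: << i >>) ->
     (exists r : K, r ^+ 2 = epsT eps S * r + epsT eps R) ->
     extends_to_A_module mulb oneB act S R d mu)
  /\
  (* (b) *)
  (S = 0 -> R = ptens [:: oneB; oneB] ->
     extends_to_A_module mulb oneB act S R d mu).
Proof.
split.
  move=> eps hmul heps1 hact _.
  exact: (partA _ _ mulb oneB _ _ act Vunit S R homS homR d mu size_mu mu_incr eps heps1 hact).
move=> HS HR.
exact: (partB _ _ mulb oneB _ _ act Vunit S R d hd mu size_mu HS HR).
Qed.
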